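(* Let $E=(E^0,E^1,r,s)$ be a graph. If $E$ has no cycles and $E$ has a countable (finite or countably infinite) number of shift-tail equivalence classes of boundary paths, then $E$ contains a line point.
   Context: A graph $E=(E^0,E^1,r,s)$ has vertex set $E^0$, edge set $E^1$, range and source maps. A cycle is a path $e_1\cdots e_n$ ($n\ge1$, $r(e_i)=s(e_{i+1})$) with $s(e_1)=r(e_n)$. A vertex is singular if it emits no edges or infinitely many edges. Boundary paths: infinite paths $e_1e_2\cdots$ together with finite paths (including vertices as length-$0$ paths) whose range is singular. The shift $\sigma_E$ removes the first edge (fixes vertices; sends a single edge $e$ to $r(e)$); boundary paths $\alpha,\beta$ are shift-tail equivalent if $\sigma_E^m(\alpha)=\sigma_E^n(\beta)$ for some $m,n\in\mathbb{N}$. For $v\in E^0$, $T(v)$ is the set of vertices reachable from $v$ by a path (including $v$). A bifurcation vertex emits at least two edges. $v$ is a line point if $T(v)$ contains no bifurcation vertex and no vertex of $T(v)$ lies on a cycle. *)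

(* Defs.v *)
From Stdlib Require Import List.
Import ListNotations.
Set Implicit Arguments.

Section Graph.
Variables (V Ed : Type) (r s : Ed -> V).

Fixpoint is_path_from (v : V) (l : list Ed) : Prop :=
  match l with
  | [] => True
  | e :: l' => s e = v /\ is_path_from (r e) l'
  end.

Fixpoint path_range (v : V) (l : list Ed) : V :=
  match l with
  | [] => v
  | e :: l' => path_range (r e) l'
  end.

Definition is_cycle (c : list Ed) : Prop :=
  match c with
  | [] => False
  | e :: _ => is_path_from (s e) c /\ path_range (s e) c = s e
  end.

Definition no_cycles : Prop := forall c, ~ is_cycle c.

Definition on_cycle (w : V) : Prop :=
  exists c, is_cycle c /\ exists e, In e c /\ s e = w.

Definition emits_finitely (v : V) : Prop :=
  exists l : list Ed, forall e, s e = v -> In e l.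
Definition singular (v : V) : Prop :=
  (forall e, s e <> v) \/ ~ emits_finitely v.

Definition bifurcation (v : V) : Prop :=
  exists e1 e2, e1 <> e2 /\ s e1 = v /\ s e2 = v.

Definition reachable (v w : V) : Prop :=
  exists l, is_path_from v l /\ path_range v l = w.

Definition line_point (v : V) : Prop :=
  forall w, reachable v w -> ~ bifurcation w /\ ~ on_cycle w.

Inductive gpath : Type :=
  | PFin : V -> list Ed -> gpath
  | PInf : (nat -> Ed) -> gpath.

Definition is_boundary (a : gpath) : Prop :=
  match a with
  | PFin v l => is_path_from v l /\ singular (path_range v l)
  | PInf p => forall n, r (p n) = s (p (S n))
  end.

Definition shift (a : gpath) : gpath :=
  match a with
  | PFin v [] => PFin v []
  | PFin _ (e :: l) => PFin (r e) l
  | PInf p => PInf (fun n => p (S n))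
  end.

Definition path_eq (a b : gpath) : Prop :=
  match a, b with
  | PFin v l, PFin w k => v = w /\ l = k
  | PInf p, PInf q => forall n, p n = q n
  | _, _ => False
  end.

Definition shift_tail_equiv (a b : gpath) : Prop :=
  exists m n : nat, path_eq (Nat.iter m shift a) (Nat.iter n shift b).

(* The set of shift-tail equivalence classes of boundary paths is countable
   (finite or countably infinite): there is a (partial) enumeration
   nat -> option boundary path meeting every class. *)
Definition countably_many_tail_classes : Prop :=
  exists g : nat -> option gpath,
    (forall n b, g n = Some b -> is_boundary b) /\
    (forall a, is_boundary a ->
       exists n b, g n = Some b /\ shift_tail_equiv a b).

End Graph.

(* Main.v *)
Require Import Defs.
From Stdlib Require Import List.
From Stdlib Require Import Arith Lia Classical ClassicalEpsilon.
Import ListNotations.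
Set Implicit Arguments.

Fixpoint wseq (V Ed : Type) (r : Ed -> V) (pick : nat -> V -> list Ed * Ed) (v0 : V) (t : nat) : V :=
  match t with
  | 0 => v0
  | S t' => r (snd (pick t' (wseq r pick v0 t')))
  end.

Definition cseq (V Ed : Type) (r : Ed -> V) (pick : nat -> V -> list Ed * Ed) (v0 : V) (t : nat) : Ed :=
  snd (pick t (wseq r pick v0 t)).

Definition seg (V Ed : Type) (r : Ed -> V) (pick : nat -> V -> list Ed * Ed) (v0 : V) (t : nat) : list Ed :=
  fst (pick t (wseq r pick v0 t)) ++ [cseq r pick v0 t].

Definition start (V Ed : Type) (r : Ed -> V) (pick : nat -> V -> list Ed * Ed) (v0 : V) (t : nat) : Ed * list Ed :=
  match seg r pick v0 t with
  | [] => (cseq r pick v0 t, [])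
  | a :: l => (a, l)
  end.

Fixpoint St (V Ed : Type) (r : Ed -> V) (pick : nat -> V -> list Ed * Ed) (v0 : V) (k : nat) : nat * Ed * list Ed :=
  match k with
  | 0 => (0, fst (start r pick v0 0), snd (start r pick v0 0))
  | S k' => match St r pick v0 k' with
            | (t, e, []) => (S t, fst (start r pick v0 (S t)), snd (start r pick v0 (S t)))
            | (t, e, e' :: rem) => (t, e', rem)
            end
  end.

Lemma start_ok (V Ed : Type) (r : Ed -> V) pick (v0 : V) t :
  fst (start r pick v0 t) :: snd (start r pick v0 t) = seg r pick v0 t.
Proof.
  unfold start. destruct (seg r pick v0 t) eqn:E; [|reflexivity].
  unfold seg in E. destruct (fst (pick t (wseq r pick v0 t))); discriminate.
Qed.

Lemma path_app1 (V Ed : Type) (r s : Ed -> V) l : forall v e,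
  is_path_from r s v l -> s e = path_range r v l -> is_path_from r s v (l ++ [e]).
Proof.
  induction l as [|a l IH]; simpl; intros v e H1 H2.
  - auto.
  - destruct H1. split; auto.
Qed.

Lemma path_mid (V Ed : Type) (r s : Ed -> V) pre : forall v e e' rest,
  is_path_from r s v (pre ++ e :: e' :: rest) -> s e' = r e.
Proof.
  induction pre as [|a pre IH]; simpl; intros v e e' rest H.
  - tauto.
  - destruct H as [_ H]. eapply IH; eauto.
Qed.

Lemma St_inv (V Ed : Type) (r : Ed -> V) pick (v0 : V) k :
  exists pre, pre ++ snd (fst (St r pick v0 k)) :: snd (St r pick v0 k) = seg r pick v0 (fst (fst (St r pick v0 k))).
Proof.
  induction k as [|k IH]; simpl.
  - exists []. apply start_ok.
  - destruct (St r pick v0 k) as [[t e] rem]. simpl in *.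
    destruct IH as [pre Hp]. destruct rem as [|e' rem]; simpl.
    + exists []. apply start_ok.
    + exists (pre ++ [e]). rewrite <- app_assoc. exact Hp.
Qed.

Lemma St_le (V Ed : Type) (r : Ed -> V) pick (v0 : V) k :
  fst (fst (St r pick v0 k)) <= k.
Proof.
  induction k as [|k IH]; simpl; [lia|].
  destruct (St r pick v0 k) as [[t e] rem]; simpl in *.
  destruct rem; simpl; lia.
Qed.

Lemma St_walk (V Ed : Type) (r : Ed -> V) pick (v0 : V) rem : forall e k t,
  St r pick v0 k = (t, e, rem) -> exists k' e', St r pick v0 k' = (t, e', []).
Proof.
  induction rem as [|a rem IH]; intros e k t H.
  - eauto.
  - apply (IH a (S k)). simpl. rewrite H. reflexivity.
Qed.

Lemma St_reach (V Ed : Type) (r : Ed -> V) pick (v0 : V) t :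
  exists k, St r pick v0 k = (t, fst (start r pick v0 t), snd (start r pick v0 t)).
Proof.
  induction t as [|t IH].
  - exists 0. reflexivity.
  - destruct IH as [k Hk].
    destruct (@St_walk _ _ r pick v0 _ _ _ _ Hk) as [k' [e' H']].
    exists (S k'). simpl. rewrite H'. reflexivity.
Qed.


Lemma seg_path (V Ed : Type) (r s : Ed -> V) pick (v0 : V)
  (Hp : forall t v, is_path_from r s v (fst (pick t v)) /\ s (snd (pick t v)) = path_range r v (fst (pick t v)))
  t : is_path_from r s (wseq r pick v0 t) (seg r pick v0 t).
Proof.
  unfold seg, cseq. destruct (Hp t (wseq r pick v0 t)). apply path_app1; auto.
Qed.

Lemma St_conn (V Ed : Type) (r s : Ed -> V) pick (v0 : V)
  (Hp : forall t v, is_path_from r s v (fst (pick t v)) /\ s (snd (pick t v)) = path_range r v (fst (pick t v)))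
  k : r (snd (fst (St r pick v0 k))) = s (snd (fst (St r pick v0 (S k)))).
Proof.
  destruct (St_inv r pick v0 k) as [pre Hpre].
  pose proof (@seg_path _ _ r s pick v0 Hp (fst (fst (St r pick v0 k)))) as HP.
  simpl. destruct (St r pick v0 k) as [[t e] rem]. simpl in *.
  destruct rem as [|e' rem]; simpl.
  - unfold seg in Hpre. apply app_inj_tail in Hpre. destruct Hpre as [_ He]. subst e.
    pose proof (@seg_path _ _ r s pick v0 Hp (S t)) as HP2.
    rewrite <- start_ok in HP2. destruct HP2 as [H1 _]. rewrite H1. reflexivity.
  - rewrite <- Hpre in HP. symmetry. eapply path_mid; eauto.
Qed.

Lemma St_hit (V Ed : Type) (r : Ed -> V) pick (v0 : V) t :
  exists k, t <= k /\ snd (fst (St r pick v0 k)) = cseq r pick v0 t.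
Proof.
  destruct (St_reach r pick v0 t) as [k Hk].
  destruct (@St_walk _ _ r pick v0 _ _ _ _ Hk) as [k' [e' H']].
  exists k'. pose proof (St_le r pick v0 k') as Hl. pose proof (St_inv r pick v0 k') as [pre Hpre].
  rewrite H' in *. simpl in *. split; [lia|].
  unfold seg in Hpre. apply app_inj_tail in Hpre. tauto.
Qed.

Lemma inf_seg (V Ed : Type) (r s : Ed -> V) (q : nat -> Ed)
  (Hq : forall n, r (q n) = s (q (S n))) k : forall i,
  is_path_from r s (s (q i)) (map q (seq i k)) /\
  path_range r (s (q i)) (map q (seq i k)) = s (q (i + k)).
Proof.
  induction k as [|k IH]; intros i; simpl.
  - rewrite Nat.add_0_r. auto.
  - rewrite Hq. destruct (IH (S i)) as [H1 H2]. split; auto.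
    rewrite H2. f_equal. f_equal. lia.
Qed.

Lemma inf_nocycle (V Ed : Type) (r s : Ed -> V) (q : nat -> Ed)
  (Hq : forall n, r (q n) = s (q (S n))) (Hnc : no_cycles r s) i j :
  i < j -> s (q i) = s (q j) -> False.
Proof.
  intros Hij Hs. apply (Hnc (map q (seq i (S (j - i - 1))))).
  destruct (@inf_seg _ _ r s q Hq (S (j - i - 1)) i) as [H1 H2].
  simpl in *. split; auto.
  rewrite H2. rewrite Hs. f_equal. f_equal. lia.
Qed.

Lemma iter_inf (V Ed : Type) (r s : Ed -> V) m (p : nat -> Ed) :
  exists f, Nat.iter m (@shift V Ed r) (PInf V p) = PInf V f /\ forall i, f i = p (m + i).
Proof.
  induction m as [|m IH]; simpl.
  - exists p. auto.
  - destruct IH as [f [H1 H2]]. rewrite H1. simpl. eexists; split; [reflexivity|].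
    intros i. cbv beta. rewrite H2. f_equal. lia.
Qed.

Lemma iter_fin (V Ed : Type) (r : Ed -> V) m v l :
  exists v' l', Nat.iter m (@shift V Ed r) (PFin v l) = PFin v' l'.
Proof.
  induction m as [|m IH]; simpl.
  - eauto.
  - destruct IH as [v' [l' H]]. rewrite H. simpl. destruct l'; eauto.
Qed.

Lemma sqrt_idx n m : exists t, m <= t /\ t - Nat.sqrt t * Nat.sqrt t = n.
Proof.
  exists ((n + m) * (n + m) + n).
  assert (Nat.sqrt ((n + m) * (n + m) + n) = n + m) as ->.
  { apply Nat.sqrt_unique. split; nia. }
  split; nia.
Qed.

Theorem lemma4p7 (V Ed : Type) (r s : Ed -> V) (HV : inhabited V) :
  no_cycles r s ->
  countably_many_tail_classes r s ->
  exists v : V, line_point r s v.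
Proof.
  intros Hnc [g [Hg1 Hg2]]. destruct HV as [v0].
  destruct (classic (exists v, line_point r s v)) as [H|Hno]; [exact H|exfalso].
  assert (HF : forall w, exists x : list Ed * Ed * Ed,
    is_path_from r s w (fst (fst x)) /\ snd (fst x) <> snd x /\
    s (snd (fst x)) = path_range r w (fst (fst x)) /\ s (snd x) = path_range r w (fst (fst x))).
  { intro w. apply NNPP; intro Hn. apply Hno. exists w. intros w' [l [Hl Hr]]. split.
    - intros [e1 [e2 [Hne [H1 H2]]]]. apply Hn. exists (l,e1,e2). subst w'. simpl. auto.
    - intros [c [Hc _]]. exact (Hnc c Hc). }
  pose (F := fun w => proj1_sig (constructive_indefinite_description _ (HF w))).
  assert (HFp : forall w, is_path_from r s w (fst (fst (F w))) /\ snd (fst (F w)) <> snd (F w) /\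
    s (snd (fst (F w))) = path_range r w (fst (fst (F w))) /\ s (snd (F w)) = path_range r w (fst (fst (F w)))).
  { intro w. exact (proj2_sig (constructive_indefinite_description _ (HF w))). }
  clearbody F.
  pose (avoid := fun n e => exists q, g n = Some (PInf V q) /\ exists j, q j = e).
  pose (idx := fun t => t - Nat.sqrt t * Nat.sqrt t).
  pose (pick := fun t v => (fst (fst (F v)),
     if excluded_middle_informative (avoid (idx t) (snd (fst (F v)))) then snd (F v) else snd (fst (F v)))).
  assert (Hp : forall t v, is_path_from r s v (fst (pick t v)) /\ s (snd (pick t v)) = path_range r v (fst (pick t v))).
  { intros t v. unfold pick; simpl. destruct (HFp v) as [A [B [C D]]].
    destruct excluded_middle_informative; auto. }
  pose (p := fun k => snd (fst (St r pick v0 k))).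
  assert (Hb : is_boundary r s (PInf V p)).
  { intro k. unfold p. apply (@St_conn _ _ r s pick v0 Hp). }
  destruct (Hg2 _ Hb) as [n [b [Hgn [m [k Heq]]]]].
  destruct (@iter_inf _ _ r s m p) as [f1 [E1 F1]]. rewrite E1 in Heq.
  destruct b as [v l | q].
  { destruct (@iter_fin _ _ r k v l) as [v' [l' E2]]. rewrite E2 in Heq. exact Heq. }
  destruct (@iter_inf _ _ r s k q) as [f2 [E2 F2]]. rewrite E2 in Heq. simpl in Heq.
  assert (Hpq : forall i, p (m + i) = q (k + i)).
  { intro i. rewrite <- F1, <- F2. apply Heq. }
  assert (Hqb : forall n, r (q n) = s (q (S n))) by exact (Hg1 _ _ Hgn).
  destruct (sqrt_idx n m) as [t [Hmt Hidx]].
  destruct (St_hit r pick v0 t) as [K [HtK HK]].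
  assert (Hc : q (k + (K - m)) = cseq r pick v0 t).
  { rewrite <- Hpq. replace (m + (K - m)) with K by lia. exact HK. }
  unfold cseq in Hc. set (w := wseq r pick v0 t) in Hc. unfold pick in Hc. simpl in Hc.
  destruct (HFp w) as [A [B [C D]]].
  destruct excluded_middle_informative as [Ha|Ha].
  - destruct Ha as [q' [Hq' [j Hj]]]. change (idx t) with (t - Nat.sqrt t * Nat.sqrt t) in Hq'.
    rewrite Hidx, Hgn in Hq'. injection Hq' as Hq'. subst q'.
    assert (Hs : s (q j) = s (q (k + (K - m)))).
    { rewrite Hj, Hc, C, D. reflexivity. }
    destruct (Nat.lt_trichotomy j (k + (K - m))) as [Hl|[He|Hl]].
    + exact (@inf_nocycle _ _ r s q Hqb Hnc _ _ Hl Hs).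
    + apply B. rewrite <- Hj, <- Hc, He. reflexivity.
    + exact (@inf_nocycle _ _ r s q Hqb Hnc _ _ Hl (eq_sym Hs)).
  - apply Ha. exists q. split.
    + change (idx t) with (t - Nat.sqrt t * Nat.sqrt t). rewrite Hidx. exact Hgn.
    + exists (k + (K - m)). exact Hc.
Qed.
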